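(* For every $n\ge 2$, the compact set $\widetilde\Gamma_n\subset\mathbb C^n$ is polynomially convex.
   Context: $\mathbb D$ is the open unit disc. $\widetilde{\mathbb G}_n=\{(y_1,\dots,y_{n-1},q)\in\mathbb C^n: q\in\mathbb D,\ y_j=\beta_j+\bar\beta_{n-j}q$ for some $\beta_j\in\mathbb C$ with $|\beta_j|+|\beta_{n-j}|<\binom{n}{j}$, $j=1,\dots,n-1\}$; $\widetilde\Gamma_n$ is its closure. A compact $K\subset\mathbb C^n$ is polynomially convex if for every $y\in\mathbb C^n\setminus K$ there is a polynomial $P$ in $n$ variables with $|P(y)|>\sup_{z\in K}|P(z)|$. *)

(* Defs.v *)
From mathcomp Require Import all_boot all_order all_algebra.
From mathcomp Require Import complex.
From mathcomp Require Import reals.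
From mathcomp Require Import mpoly.

Set Implicit Arguments.
Unset Strict Implicit.
Unset Printing Implicit Defensive.

Import Order.TTheory GRing.Theory Num.Theory.
Local Open Scope ring_scope.

(* A point of C^n is a function z : 'I_n -> R[i].
   Coordinates (y_1, ..., y_{n-1}, q): y_j is stored at index j-1,
   q is stored at index n-1. *)

Definition Gtilde (R : realType) (n : nat) (z : 'I_n -> R[i]) : Prop :=
  exists q : R[i],
    (forall i : 'I_n, val i = n.-1 -> z i = q) /\ `|q| < 1 /\
    exists beta : nat -> R[i],
      forall j : nat, (0 < j < n)%N ->
        (forall i : 'I_n, val i = j.-1 ->
            z i = beta j + (beta (n - j)%N)^* * q) /\
        `|beta j| + `|beta (n - j)%N| < ('C(n, j))%:R.

(* Its closure \widetilde{\Gamma}_n in C^n (product topology on C^n,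
   i.e. the max-of-coordinates metric), written out. *)
Definition Gammatilde (R : realType) (n : nat) (z : 'I_n -> R[i]) : Prop :=
  forall eps : R[i], 0 < eps ->
    exists w : 'I_n -> R[i], Gtilde w /\ forall i : 'I_n, `|z i - w i| < eps.

(* Polynomial convexity of K (as in the paper):
   for every y outside K there is a polynomial P in n variables with
   |P(y)| > sup_{z in K} |P(z)|; "sup < |P(y)|" is written as the existence
   of an upper bound c of |P| on K with c < |P(y)|. *)
Definition poly_convex (R : realType) (n : nat) (K : ('I_n -> R[i]) -> Prop) : Prop :=
  forall y : 'I_n -> R[i], ~ K y ->
    exists P : {mpoly R[i][n]}, exists c : R[i],
      c < `|P.@[y]| /\ forall z : 'I_n -> R[i], K z -> `|P.@[z]| <= c.

(* Main.v *)
Require Import Defs.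
From mathcomp Require Import all_boot all_order all_algebra.
From mathcomp Require Import complex reals mpoly.
From mathcomp Require Import ring lra.
Set Implicit Arguments. Unset Strict Implicit. Unset Printing Implicit Defensive.
Import Order.TTheory GRing.Theory Num.Theory.
Local Open Scope ring_scope.
Local Notation "x %:C" := (x%:C)%C : ring_scope.

Section Basic.
Variable R : realType.
Local Notation C := R[i].

Definition nc (z : C) : R := Num.sqrt (complex.Re z ^+ 2 + complex.Im z ^+ 2).

Lemma ncE (z : C) : `|z| = (nc z)%:C.
Proof. exact: normc_def. Qed.

Lemma conjE (z : C) : z^* = conjc z.
Proof. by []. Qed.

Lemma nc_ge0 z : 0 <= nc z.
Proof. by rewrite /nc sqrtr_ge0. Qed.

Lemma ncD x y : nc (x + y) <= nc x + nc y.
Proof. by rewrite -lecR rmorphD /= -!ncE ler_normD. Qed.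

Lemma ncM x y : nc (x * y) = nc x * nc y.
Proof. by apply: complexI; rewrite rmorphM /= -!ncE normrM. Qed.

Lemma ncN x : nc (- x) = nc x.
Proof. by apply: complexI; rewrite -!ncE normrN. Qed.

Lemma ncB x y : nc (x - y) = nc (y - x).
Proof. by rewrite -ncN opprB. Qed.

Lemma ncJ x : nc (x^*) = nc x.
Proof. by apply: complexI; rewrite -!ncE norm_conjC. Qed.

Lemma nc_sqr z : ((nc z)^+2)%:C = z * z^*.
Proof. by rewrite rmorphXn /= -ncE normCK. Qed.

Lemma ncC (a : R) : nc a%:C = `|a|.
Proof. by rewrite /nc /= expr0n /= addr0 sqrtr_sqr. Qed.

Lemma ncX x k : nc (x ^+ k) = nc x ^+ k.
Proof. by apply: complexI; rewrite rmorphXn /= -!ncE normrX. Qed.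

Lemma ncV x : nc (x^-1) = (nc x)^-1.
Proof. by apply: complexI; rewrite fmorphV /= -!ncE normfV. Qed.

Lemma nc_eq0 z : nc z = 0 -> z = 0.
Proof. by move=> h; apply/eqP; rewrite -normr_eq0 ncE h. Qed.

Lemma nc1 : nc 1 = 1.
Proof. by rewrite -[1 : C]/(1%:C) ncC normr1. Qed.

Lemma ncn k : nc k%:R = k%:R.
Proof. by rewrite -(rmorph_nat (real_complex R)) ncC normr_nat. Qed.

Lemma Re_nc z : complex.Re z <= nc z.
Proof.
rewrite /nc; apply: le_trans (ler_norm (complex.Re z)) _.
rewrite -sqrtr_sqr ler_sqrt; last by rewrite addr_ge0 // sqr_ge0.
by rewrite lerDl sqr_ge0.
Qed.

Lemma conjCR (a : R) : (a%:C)^* = a%:C.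
Proof. exact: conjc_real. Qed.

Lemma ReJ (z : C) : z + z^* = (2 * complex.Re z)%:C.
Proof. by rewrite conjE addcJ rmorphM /= rmorph_nat. Qed.


Lemma cjD (x y : C) : (x + y)^* = x^* + y^*. Proof. exact: rmorphD. Qed.
Lemma cjB (x y : C) : (x - y)^* = x^* - y^*. Proof. exact: rmorphB. Qed.
Lemma cjN (x : C) : (- x)^* = - x^*. Proof. exact: rmorphN. Qed.
Lemma cjM (x y : C) : (x * y)^* = x^* * y^*. Proof. exact: rmorphM. Qed.
Lemma cjX (x : C) k : (x ^+ k)^* = x^* ^+ k. Proof. exact: rmorphXn. Qed.
Lemma cjV (x : C) : (x^-1)^* = (x^*)^-1. Proof. exact: fmorphV. Qed.
Lemma cjK (x : C) : x^*^* = x. Proof. exact: conjCK. Qed.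
Lemma cj1 : (1 : C)^* = 1. Proof. exact: rmorph1. Qed.
Lemma cjn k : (k%:R : C)^* = k%:R. Proof. exact: rmorph_nat. Qed.

Definition H (s p : C) : Prop :=
  nc p <= 1 /\ nc s <= 2 /\ nc (s - s^* * p) <= 1 - nc p ^+ 2.

Lemma ppJ (p : C) : p * p^* = (nc p ^+ 2)%:C.
Proof. by rewrite nc_sqr. Qed.

Lemma H_of_beta (g p : C) : nc g <= 1 -> nc p <= 1 -> H (g + g^* * p) p.
Proof.
move=> hg hp; split => //; split.
  apply: le_trans (ncD _ _) _; rewrite ncM ncJ.
  have := nc_ge0 g; have := nc_ge0 p; nra.
have -> : g + g^* * p - (g + g^* * p)^* * p = g * (1 - p * p^*).
  by rewrite cjD cjM cjK; ring.
rewrite ppJ -[1 : C]/(1%:C) -rmorphB ncM ncC ger0_norm; last first.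
  have := nc_ge0 p; nra.
rewrite -[X in _ <= X]mul1r; apply: ler_wpM2r => //.
have := nc_ge0 p; nra.
Qed.

Lemma S_le (s p : C) : H s p -> nc s <= 1 + nc p.
Proof.
move=> [hp [hs hm]].
have [->|lt1] := eqVneq (nc p) 1; first by lra.
have lt1' : nc p < 1 by rewrite lt_neqAle lt1 hp.
have e : s * (1 - p * p^*) = (s - s^* * p) + (s - s^* * p)^* * p.
  by rewrite cjB cjM cjK; ring.
have : nc (s * (1 - p * p^*)) <= (1 - nc p ^+ 2) * (1 + nc p).
  rewrite e; apply: le_trans (ncD _ _) _; rewrite ncM ncJ.
  have := nc_ge0 p; have := nc_ge0 (s - s^* * p); nra.
rewrite ppJ -[1 : C]/(1%:C) -rmorphB ncM ncC ger0_norm; last first.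
  have := nc_ge0 p; nra.
have hpos : 0 < 1 - nc p ^+ 2 by have := nc_ge0 p; nra.
by move=> h; rewrite -(ler_pM2r hpos) [X in _ <= X]mulrC.
Qed.

Lemma real_d1 (u r S M X : R) : 0 <= u -> u < 1 -> 0 <= r -> r <= 1 ->
  0 <= S -> S <= 1 + r -> 0 <= M -> M <= 1 - r ^+ 2 -> X <= u * M ->
  0 <= 4 * (1 - u ^+ 2 * r ^+ 2) - S ^+ 2 * (1 - u ^+ 2) - 4 * X.
Proof.
move=> u0 u1 r0 r1 S0 S1 M0 M1 X1.
have h1 : S ^+ 2 * (1 - u ^+ 2) <= (1 + r) ^+ 2 * (1 - u ^+ 2).
  apply: ler_wpM2r; first nra. nra.
have h2 : X <= u * (1 - r ^+ 2) by nra.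
have h3 : 0 <= (1 - r) * (1 - u) * ((3 + r) - u * (1 + 3 * r)).
  apply: mulr_ge0; first nra. nra.
nra.
Qed.

Lemma ncCC (z : C) : (nc z)%:C * (nc z)%:C = z * z^*.
Proof. by rewrite -nc_sqr rmorphXn /= expr2. Qed.

Lemma ReC (z : C) : (complex.Re z)%:C = (z + z^*) / 2.
Proof. by rewrite ReJ rmorphM /= rmorph_nat mulrC mulrA mulVf ?mul1r // pnatr_eq0. Qed.

Lemma Gid (w s p : C) :
  (nc (2 - w * s)) ^+ 2 - (nc (2 * w * p - s)) ^+ 2 =
  4 * (1 - nc w ^+ 2 * nc p ^+ 2) - nc s ^+ 2 * (1 - nc w ^+ 2)
    - 4 * complex.Re (w * (s - s^* * p)).
Proof.
apply: complexI.
rewrite !(rmorphB, rmorphD, rmorphM, rmorph1, rmorph_nat) /= !ncCC ReC.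
rewrite !(cjB, cjD, cjN, cjM, cjK, cjn, cj1).
by field.
Qed.

Lemma H_bound (s p w : C) : H s p -> nc w < 1 ->
  nc (2 * w * p - s) <= nc (2 - w * s).
Proof.
move=> hH hw; have hS := S_le hH; case: hH => [hp [hs hm]].
have e := Gid w s p.
have hX : complex.Re (w * (s - s^* * p)) <= nc w * nc (s - s^* * p).
  by rewrite -ncM Re_nc.
have := real_d1 (nc_ge0 w) hw (nc_ge0 p) hp (nc_ge0 s) hS (nc_ge0 _) hm hX.
rewrite -e.
have := nc_ge0 (2 - w * s); have := nc_ge0 (2 * w * p - s). nra.
Qed.


Lemma real_d2 (r S M : R) : 0 <= r -> r <= 1 -> 0 <= S -> S <= 2 ->
  1 - r ^+ 2 < M -> M <= 4 ->
  let t := 1 - (4 * M - 4 * (1 - r ^+ 2)) / (2 * (4 * M + 8)) in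
  0 <= t /\ t < 1 /\ 4 * (1 - t ^+ 2 * r ^+ 2) - S ^+ 2 * (1 - t ^+ 2) - 4 * (t * M) < 0.
Proof.
move=> r0 r1 S0 S2 hM M4 t.
have K0 : 0 < 2 * (4 * M + 8) by nra.
set h := (4 * M - 4 * (1 - r ^+ 2)) / (2 * (4 * M + 8)).
have hh : h * (2 * (4 * M + 8)) = 4 * M - 4 * (1 - r ^+ 2).
  by rewrite /h mulfVK // gt_eqF.
have h0 : 0 < h by rewrite /h divr_gt0 //; nra.
have h1 : h <= 1 / 2 by nra.
rewrite /t -/h; split; first nra. split; first nra.
have e1 : 0 <= h * (2 - h) * S ^+ 2 by apply: mulr_ge0; nra.
have e2 : h * (2 - h) * (4 * r ^+ 2) <= h * 2 * 4 by apply: ler_pM; nra.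
nra.
Qed.

Lemma H_sep (s p : C) : ~ H s p -> nc p <= 1 -> nc s <= 2 ->
  exists w : C, nc w < 1 /\ nc (2 - w * s) < nc (2 * w * p - s).
Proof.
move=> nH hp hs.
set m := s - s^* * p.
have hM : 1 - nc p ^+ 2 < nc m.
  by rewrite ltNge; apply/negP => h; apply: nH.
have M0 : 0 < nc m by have := nc_ge0 p; nra.
have M4 : nc m <= 4.
  rewrite /m; apply: le_trans (ncD _ _) _; rewrite ncN ncM ncJ.
  have := nc_ge0 p; have := nc_ge0 s; nra.
have [t0 [t1 hG]] := real_d2 (nc_ge0 p) hp (nc_ge0 s) hs hM M4.
set t := 1 - _ / _ in t0 t1 hG.
exists ((t / nc m)%:C * m^*).
have hw : nc ((t / nc m)%:C * m^*) = t.
  rewrite ncM ncC ncJ ger0_norm ?divr_ge0 //; last exact: ltW.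
  by rewrite mulfVK // gt_eqF.
rewrite hw; split => //.
have hRe : complex.Re ((t / nc m)%:C * m^* * m) = t * nc m.
  rewrite -mulrA [m^* * m]mulrC -ncCC -rmorphM -rmorphM /=.
  by rewrite mulrA mulfVK // gt_eqF.
have e := Gid ((t / nc m)%:C * m^*) s p.
rewrite hw -/m hRe in e.
have := nc_ge0 (2 - (t / nc m)%:C * m^* * s).
have := nc_ge0 (2 * ((t / nc m)%:C * m^*) * p - s).
nra.
Qed.

Lemma bern (u : R) N : 0 <= u -> u <= 1 -> u ^+ N * (1 + N%:R * (1 - u)) <= 1.
Proof.
move=> u0 u1; elim: N => [|N IH]; first by rewrite expr0 mul0r addr0 mulr1.
have hx : u ^+ N.+1 <= 1 by apply: exprn_ile1.
have hx0 : 0 <= u ^+ N by apply: exprn_ge0.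
rewrite exprS -natr1.
have : u * (u ^+ N * (1 + N%:R * (1 - u))) <= u by rewrite -[X in _ <= X]mulr1 ler_wpM2l.
rewrite exprS in hx; nra.
Qed.

Lemma geo (u th : R) : 0 <= u -> u < 1 -> 0 < th -> exists N, u ^+ N < th.
Proof.
move=> u0 u1 th0.
have d0 : 0 < th * (1 - u) by rewrite mulr_gt0 // subr_gt0.
have hb := @archi_boundP R (1 / (th * (1 - u))) (ltW (divr_gt0 ltr01 d0)).
set N := Num.bound _ in hb.
exists N.
have hB := bern N u0 (ltW u1).
have : 1 < N%:R * (th * (1 - u)).
  by rewrite -ltr_pdivrMr.
have := exprn_ge0 N u0; nra.
Qed.


Definition F (a b e : C) (N : nat) (s p : C) : C :=
  (a * p + b * s) * \sum_(k < N) (e * s) ^+ k.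

Lemma nc_lb (x y : C) : nc x - nc y <= nc (x - y).
Proof.
have := ncD (x - y) y; rewrite subrK; lra.
Qed.

Lemma Fid (w s p : C) N :
  F (2 * w) (-1) (w / 2) N s p * (2 - w * s) =
  2 * (2 * w * p - s) * (1 - (w / 2 * s) ^+ N).
Proof.
rewrite /F.
have hX := subrX1 (w / 2 * s) N.
set X := bigop.body _ _ _ in hX *.
have -> : (w / 2 * s) ^+ N = 1 + (w / 2 * s - 1) * X by rewrite -hX; ring.
by field.
Qed.

Lemma nc2 : nc 2 = 2.
Proof. exact: (ncn 2). Qed.

Lemma sepH (s0 p0 : C) : ~ H s0 p0 ->
  exists a b e N c, c < nc (F a b e N s0 p0) /\
    forall s p, H s p -> nc (F a b e N s p) <= c.
Proof.
move=> nH.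
have F1 : forall a b s p, F a b 0 1 s p = a * p + b * s.
  by move=> a b s p; rewrite /F big_ord1 expr0 mulr1.
case: (lerP (nc p0) 1) => hp; last first.
  exists 1, 0, 0, 1%N, 1; rewrite F1 mul0r addr0 mul1r; split => //.
  by move=> s p [h _]; rewrite F1 mul0r addr0 mul1r.
case: (lerP (nc s0) 2) => hs; last first.
  exists 0, 1, 0, 1%N, 2; rewrite F1 mul0r add0r mul1r; split => //.
  by move=> s p [_ [h _]]; rewrite F1 mul0r add0r mul1r.
have [w [hw hAB]] := H_sep nH hp hs.
set A := nc (2 * w * p0 - s0) in hAB; set B := nc (2 - w * s0) in hAB.
have hB0 : 0 < B.
  have := nc_lb 2 (w * s0); rewrite nc2 ncM -/B.
  have := nc_ge0 w; have := nc_ge0 s0; nra.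
have hth : 0 < (A - B) / (A + B) by apply: divr_gt0; lra.
have [N hN] := geo (nc_ge0 w) hw hth.
have uN0 : 0 <= nc w ^+ N by apply: exprn_ge0; apply: nc_ge0.
have hxs : forall s, nc s <= 2 -> nc ((w / 2 * s) ^+ N) <= nc w ^+ N.
  move=> s hs2; rewrite ncX ncM ncM ncV nc2; apply: lerXn2r; rewrite ?nnegrE;
    have := nc_ge0 w; have := nc_ge0 s; nra.
have hN' : nc w ^+ N * (A + B) < A - B by rewrite -ltr_pdivlMr //; lra.
exists (2 * w), (-1), (w / 2), N, (2 * (1 + nc w ^+ N)); split.
  have e := Fid w s0 p0 N; move/(congr1 nc): e; rewrite !ncM nc2 -/A -/B => e.
  have hx := hxs s0 hs.
  have h1 : 1 - nc w ^+ N <= nc (1 - (w / 2 * s0) ^+ N).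
    by apply: le_trans (nc_lb _ _); rewrite nc1; lra.
  have hF0 := nc_ge0 (F (2 * w) (-1) (w / 2) N s0 p0).
  have hA0 : 0 <= A by apply: nc_ge0.
  nra.
move=> s p hH; have hb := H_bound hH hw; have [_ [hs2 _]] := hH.
have e := Fid w s p N; move/(congr1 nc): e; rewrite !ncM nc2 => e.
have hx := hxs s hs2.
have h1 : nc (1 - (w / 2 * s) ^+ N) <= 1 + nc w ^+ N.
  by apply: le_trans (ncD _ _) _; rewrite ncN nc1; lra.
have hD : 0 < nc (2 - w * s).
  have := nc_lb 2 (w * s); rewrite nc2 ncM.
  have := nc_ge0 w; have := nc_ge0 s; nra.
rewrite -(ler_pM2r hD) e.
have := nc_ge0 (2 * w * p - s); have := nc_ge0 (1 - (w / 2 * s) ^+ N).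
nra.
Qed.


Lemma le_eps (x y : R) : (forall e, 0 < e -> e <= 1 -> x <= y + 8 * e) -> x <= y.
Proof.
move=> h; rewrite leNgt; apply/negP => hxy.
pose e := Num.min 1 ((x - y) / 16).
have e0 : 0 < e by rewrite lt_min ltr01 divr_gt0 // subr_gt0.
have e1 : e <= 1 by rewrite ge_min lexx.
have e2 : e <= (x - y) / 16 by rewrite ge_min lexx orbT.
have := h e e0 e1; lra.
Qed.

Lemma H_closed (s p : C) :
  (forall e, 0 < e -> exists s' p', H s' p' /\ nc (s - s') <= e /\ nc (p - p') <= e) ->
  H s p.
Proof.
move=> h.
have key : forall e, 0 < e -> e <= 1 ->
  [/\ nc p <= 1 + 8 * e, nc s <= 2 + 8 * e & nc (s - s^* * p) <= 1 - nc p ^+ 2 + 8 * e].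
  move=> e e0 e1; have [s' [p' [[hp [hs hm]] [ds dp]]]] := h e e0.
  have hp1 : nc p <= nc p' + e.
    by have := ncD (p - p') p'; rewrite subrK; lra.
  have hs1 : nc s <= nc s' + e.
    by have := ncD (s - s') s'; rewrite subrK; lra.
  split; [lra|lra|].
  have eq1 : s - s^* * p = (s' - s'^* * p') + ((s - s') - ((s - s')^* * p + s'^* * (p - p'))).
    by rewrite cjB; ring.
  have b1 : nc ((s - s') - ((s - s')^* * p + s'^* * (p - p'))) <= e + (e * (1 + e) + 2 * e).
    apply: le_trans (ncD _ _) _; rewrite ncN; apply: lerD => //.
    apply: le_trans (ncD _ _) _; rewrite !ncM !ncJ; apply: lerD.
      apply: ler_pM => //; [exact: nc_ge0|exact: nc_ge0|lra].
    apply: ler_pM => //; [exact: nc_ge0|exact: nc_ge0].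
  have b2 : nc p ^+ 2 <= nc p' ^+ 2 + 3 * e.
    have := nc_ge0 p; have := nc_ge0 p'; nra.
  rewrite eq1; apply: le_trans (ncD _ _) _; nra.
split; [|split]; apply: le_eps => e e0 e1; by have [] := key e e0 e1.
Qed.


Section Dim.
Variable m : nat.
Local Notation n := m.+1.

Definition yv (y : 'I_n -> C) (k : nat) : C := y (inord k).

Definition Ls (y : 'I_n -> C) (j : nat) (w : C) : C :=
  ('C(n, j)%:R)^-1 * (yv y j.-1 + w * yv y (n - j).-1).

Definition Lp (y : 'I_n -> C) (w : C) : C := w * yv y m.

Definition Cond (y : 'I_n -> C) : Prop :=
  forall j, (0 < j < n)%N -> forall w, nc w = 1 -> H (Ls y j w) (Lp y w).

Lemma unitJ (w : C) : nc w = 1 -> w^* = w^-1 /\ w != 0.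
Proof.
move=> h.
have h0 : w != 0 by apply/eqP => e; move: h; rewrite e -[0 : C]/(0%:C) ncC normr0; lra.
split => //.
have e : w * w^* = 1 by rewrite ppJ h expr1n.
by rewrite -[w^*]mul1r -(mulVf h0) -mulrA e mulr1.
Qed.

Lemma binR_gt0 j : (j <= n)%N -> 0 < ('C(n, j)%:R : R).
Proof. by move=> h; rewrite ltr0n bin_gt0. Qed.

Lemma ncbin j : (j <= n)%N -> nc (('C(n, j)%:R : C)^-1) = ('C(n, j)%:R)^-1.
Proof. by move=> h; rewrite ncV ncn. Qed.

Lemma Gt_Cond (y : 'I_n -> C) : Gtilde y -> Cond y.
Proof.
move=> [q [hq [hq1 [beta hb]]]] j hj w hw.
have hq' : yv y m = q by apply: hq; rewrite /= inordK.
have hq1' : nc q < 1 by rewrite -ltcR -ncE.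
have hjn : (j <= n)%N by case/andP: hj => _ /ltnW.
have hk : (0 < n - j < n)%N.
  by case/andP: hj => h1 h2; rewrite subn_gt0 h2 /= ltn_subrL h1.
have [ej bj] := hb j hj.
have [ek _] := hb (n - j)%N hk.
have ej' : yv y j.-1 = beta j + (beta (n - j)%N)^* * q.
  apply: ej; rewrite /= inordK //; case/andP: hj => h1 h2.
  by rewrite (leq_ltn_trans (leq_pred _) h2).
have ek' : yv y (n - j).-1 = beta (n - j)%N + (beta j)^* * q.
  rewrite subKn // in ek; apply: ek; rewrite /= inordK //; case/andP: hk => h1 h2.
  by rewrite (leq_ltn_trans (leq_pred _) h2).
have bj' : nc (beta j) + nc (beta (n - j)%N) < 'C(n, j)%:R.
  by rewrite -ltcR rmorphD /= -!ncE rmorph_nat.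
have [wJ w0] := unitJ hw.
set g := ('C(n, j)%:R)^-1 * (beta j + w * beta (n - j)%N).
have -> : Ls y j w = g + g^* * Lp y w.
  rewrite /Ls /Lp /g ej' ek' hq' !(cjM, cjD, cjV, cjn) wJ.
  field; rewrite w0 /= pnatr_eq0 -lt0n bin_gt0 //.
apply: H_of_beta; last by rewrite /Lp ncM hw mul1r hq'; lra.
rewrite /g ncM ncbin //.
have hC := binR_gt0 hjn.
rewrite ler_pdivrMl // mulr1.
apply: le_trans (ncD _ _) _; rewrite ncM hw mul1r; lra.
Qed.



Lemma Gam_Cond (y : 'I_n -> C) : Gammatilde y -> Cond y.
Proof.
move=> hG j hj w hw; apply: H_closed => e e0.
have he : 0 < (e / 2)%:C by rewrite -[0 : C]/(0%:C) ltcR; lra.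
have [z [hz hd]] := hG _ he.
have hd' : forall k, nc (yv y k - yv z k) < e / 2.
  by move=> k; rewrite -ltcR -ncE; apply: hd.
have hjn : (j <= n)%N by case/andP: hj => _ /ltnW.
have hC := binR_gt0 hjn.
have hC1 : 1 <= ('C(n, j)%:R : R) by rewrite ler1n bin_gt0.
exists (Ls z j w), (Lp z w); split; first exact: Gt_Cond hz j hj w hw.
split.
  have -> : Ls y j w - Ls z j w = ('C(n, j)%:R)^-1 *
      ((yv y j.-1 - yv z j.-1) + w * (yv y (n - j).-1 - yv z (n - j).-1)).
    by rewrite /Ls; ring.
  rewrite ncM ncbin // ler_pdivrMl // .
  apply: le_trans (ncD _ _) _; rewrite ncM hw mul1r.
  have := hd' j.-1; have := hd' (n - j).-1; nra.
have -> : Lp y w - Lp z w = w * (yv y m - yv z m) by rewrite /Lp; ring.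
by rewrite ncM hw mul1r; have := hd' m; lra.
Qed.



Lemma nc0 : nc 0 = 0.
Proof. by rewrite -[0 : C]/(0%:C) ncC normr0. Qed.

Lemma align (a b : C) : exists w, nc w = 1 /\ nc (a + w * b) = nc a + nc b.
Proof.
have [->|a0] := eqVneq a 0; first by exists 1; rewrite nc1 mul1r add0r nc0 add0r.
have [->|b0] := eqVneq b 0; first by exists 1; rewrite nc1 mulr0 addr0 nc0 addr0.
have na : 0 < nc a by rewrite lt_neqAle nc_ge0 andbT eq_sym; apply/eqP => /nc_eq0 /eqP; rewrite (negbTE a0).
have nb : 0 < nc b by rewrite lt_neqAle nc_ge0 andbT eq_sym; apply/eqP => /nc_eq0 /eqP; rewrite (negbTE b0).
exists (a * b^* / (nc a * nc b)%:C); split.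
  rewrite ncM ncM ncJ ncV ncC ger0_norm ?mulr_ge0 ?nc_ge0 //.
  by rewrite mulfV // mulf_neq0 // gt_eqF.
have hb2 : b^* * b = (nc b ^+ 2)%:C by rewrite mulrC ppJ.
have -> : a + a * b^* / (nc a * nc b)%:C * b = a * (1 + (b^* * b) / (nc a * nc b)%:C).
  by ring.
have -> : (b^* * b) / (nc a * nc b)%:C = (nc b / nc a)%:C.
  rewrite hb2 -fmorphV -rmorphM; congr (_%:C); field.
  by apply/andP; split; rewrite gt_eqF.
rewrite ncM -[1 : C]/(1%:C) -rmorphD ncC ger0_norm; last first.
  by rewrite addr_ge0 ?divr_ge0 ?nc_ge0.
by rewrite mulrDr mulr1 mulrC divfK // gt_eqF.
Qed.



Definition bet (y : 'I_n -> C) (j : nat) : C :=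
  if nc (yv y m) < 1 then
    (yv y j.-1 - (yv y (n - j).-1)^* * yv y m) / (1 - yv y m * (yv y m)^*)
  else yv y j.-1 / 2.

Lemma Cond_q (y : 'I_n -> C) : (0 < m)%N -> Cond y -> nc (yv y m) <= 1.
Proof.
move=> hm hc.
have h1 : (0 < 1 < n)%N by rewrite /= ltnS.
by have [+ _] := hc 1%N h1 1 nc1; rewrite /Lp mul1r.
Qed.

Lemma ncm1 : nc (-1) = 1.
Proof. by rewrite ncN nc1. Qed.

Lemma cjbin j : (('C(n, j)%:R : C)^-1)^* = ('C(n, j)%:R)^-1.
Proof. by rewrite cjV cjn. Qed.

Lemma Cond_rep (y : 'I_n -> C) j : (0 < m)%N -> Cond y -> (0 < j < n)%N ->
  yv y j.-1 = bet y j + (bet y (n - j))^* * yv y m /\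
  nc (bet y j) + nc (bet y (n - j)) <= 'C(n, j)%:R.
Proof.
move=> hm hc hj.
have hjn : (j <= n)%N by case/andP: hj => _ /ltnW.
have hC := binR_gt0 hjn.
have hC0 : ('C(n, j)%:R : C) != 0 by rewrite pnatr_eq0 -lt0n bin_gt0.
set q := yv y m.
set yj := yv y j.-1; set yk := yv y (n - j).-1.
have hq := Cond_q hm hc.
rewrite /bet -/q subKn // -/yj -/yk.
case: ltP => hq1.
  have hd : 0 < 1 - nc q ^+ 2 by have := nc_ge0 q; nra.
  have d0 : 1 - q * q^* != 0.
    by rewrite ppJ -[1 : C]/(1%:C) -rmorphB /= -[0 : C]/(0%:C) (inj_eq (@complexI R)) gt_eqF.
  have d0' : 1 - q^* * q != 0 by rewrite mulrC.
  split.
    rewrite !(cjM, cjB, cjN, cjV, cjD, cjK, cj1); field.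
    exact: d0'.
  have key : forall w, nc w = 1 ->
      nc ((yj - yk^* * q) / (1 - q * q^*) + w * ((yk - yj^* * q) / (1 - q * q^*)))
      <= 'C(n, j)%:R.
    move=> w hw; have [_ [_ hm3]] := hc j hj w hw.
    have [wJ w0] := unitJ hw.
    have -> : (yj - yk^* * q) / (1 - q * q^*) + w * ((yk - yj^* * q) / (1 - q * q^*)) =
       'C(n, j)%:R * (Ls y j w - (Ls y j w)^* * Lp y w) / (1 - q * q^*).
      rewrite /Ls /Lp -/q -/yj -/yk !(cjM, cjB, cjN, cjV, cjD, cjK, cj1, cjn) wJ.
      field; rewrite d0 w0 hC0 //.
    rewrite /Lp ncM hw mul1r -/q in hm3.
    rewrite ncM ncM ncn ncV ppJ -[1 : C]/(1%:C) -rmorphB ncC ger0_norm; last exact: ltW.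
    rewrite /Lp -mulrA; apply: ler_piMr; first exact: ltW.
    by rewrite ler_pdivrMr // mul1r.
  have [w [hw <-]] := align ((yj - yk^* * q) / (1 - q * q^*)) ((yk - yj^* * q) / (1 - q * q^*)).
  exact: key.
have hq1' : nc q = 1 by apply: le_anti; rewrite hq hq1.
have hz : forall w, nc w = 1 -> Ls y j w - (Ls y j w)^* * Lp y w = 0.
  move=> w hw; have [_ [_ hm3]] := hc j hj w hw.
  rewrite /Lp ncM hw mul1r -/q hq1' expr1n subrr in hm3.
  by apply: nc_eq0; apply: le_anti; rewrite hm3 nc_ge0.
have e1 := hz 1 nc1; have e2 := hz (-1) ncm1.
have eq : yj = yk^* * q.
  have : 2 * ('C(n, j)%:R)^-1 * (yj - yk^* * q) = 0.
    rewrite -[0 : C](addr0 0) -{1}e1 -e2 /Ls /Lp -/q -/yj -/yk.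
    rewrite !(cjM, cjB, cjV, cjD, cjK, cj1, cjn, cjN); ring.
  move/eqP; rewrite !mulf_eq0 invr_eq0 pnatr_eq0 (negbTE hC0) /= subr_eq0.
  by move/eqP.
split.
  by rewrite cjM eq cjV cjn; field.
have [w [hw hal]] := align yj yk.
have [_ [hs _]] := hc j hj w hw.
rewrite /Ls -/yj -/yk ncM ncV ncn hal ler_pdivrMl // in hs.
rewrite !ncM ncV nc2; lra.
Qed.



Lemma natC k : (k%:R : C) = (k%:R : R)%:C.
Proof. by rewrite rmorph_nat. Qed.

Lemma yvE (y : 'I_n -> C) (i : 'I_n) : y i = yv y i.
Proof. by rewrite /yv inord_val. Qed.

Lemma Cond_Gam (y : 'I_n -> C) : (0 < m)%N -> Cond y -> Gammatilde y.
Proof.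
move=> hm hc eps heps.
have [e [e0 ->]] : exists e : R, 0 < e /\ eps = e%:C.
  case: eps heps => a b; rewrite ltcE /= => /andP [/eqP hb ha].
  by exists a; split => //; rewrite hb.
set q := yv y m.
have hq : nc q <= 1 := Cond_q hm hc.
set K : R := (\max_(i < n.+1) 'C(n, i))%:R.
have hK : forall j, (j <= n)%N -> ('C(n, j)%:R : R) <= K.
  move=> j hj; rewrite ler_nat.
  have := @leq_bigmax _ (fun i : 'I_n.+1 => 'C(n, i)) (inord j).
  by rewrite /= inordK.
have K1 : 1 <= K by have := hK 0%N (leq0n _); rewrite bin0.
set r := 4 * K / (4 * K + e).
have hden : 0 < 4 * K + e by lra.
have hr : r * (4 * K + e) = 4 * K by rewrite /r mulfVK // gt_eqF.
have r0 : 0 <= r by rewrite /r divr_ge0 //; lra.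
have r1 : r < 1 by nra.
have hre : 3 * (1 - r) * K < e by nra.
pose w := fun i : 'I_n => if nat_of_ord i == m then r%:C * q
  else r%:C * bet y i.+1 + (r%:C * bet y (n - i.+1))^* * (r%:C * q).
have ncr : forall z, nc (r%:C * z) = r * nc z by move=> z; rewrite ncM ncC ger0_norm.
exists w; split.
  exists (r%:C * q); split; first by move=> i /= hi; rewrite /w hi eqxx.
  split; first by rewrite ncE -[1 : C]/(1%:C) ltcR ncr; nra.
  exists (fun j => r%:C * bet y j) => j hj; split.
    move=> i hi; rewrite /w.
    have hj' : (val i).+1 = j by rewrite hi prednK //; case/andP: hj.
    have -> : (val i == m) = false.
      apply/negbTE; rewrite neq_ltn; apply/orP; left.
      by rewrite -ltnS hj'; case/andP: hj.
    by rewrite hj'.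
  have [_ hb] := Cond_rep hm hc hj.
  have hjn : (j <= n)%N by case/andP: hj => _ /ltnW.
  have hC := binR_gt0 hjn.
  rewrite !ncE natC -rmorphD ltcR !ncr.
  have := nc_ge0 (bet y j); have := nc_ge0 (bet y (n - j)); nra.
move=> i; rewrite ncE ltcR /w yvE.
case: eqP => hi.
  rewrite hi -/q.
  have -> : q - r%:C * q = (1 - r)%:C * q by rewrite rmorphB rmorph1; ring.
  rewrite ncM ncC ger0_norm; last lra.
  have := nc_ge0 q; nra.
have hj : (0 < i.+1 < n)%N.
  rewrite /= ltnS; have := ltn_ord i; rewrite ltnS leq_eqVlt => /orP [/eqP //|//].
have [hrep hb] := Cond_rep hm hc hj.
rewrite /= in hrep; rewrite hrep -/q.
have hC := hK i.+1 (ltn_ord i).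
have -> : bet y i.+1 + (bet y (n - i.+1))^* * q -
    (r%:C * bet y i.+1 + (r%:C * bet y (n - i.+1))^* * (r%:C * q)) =
    (1 - r)%:C * bet y i.+1 + ((1 - r) * (1 + r))%:C * ((bet y (n - i.+1))^* * q).
  rewrite cjM conjCR !(rmorphB, rmorphM, rmorphD, rmorph1) /=; ring.
apply: le_lt_trans (ncD _ _) _.
rewrite !ncM !ncC !ger0_norm ?ncJ; [|nra|lra].
have ha := nc_ge0 (bet y i.+1); have hb0 := nc_ge0 (bet y (n - i.+1)); have hq0 := nc_ge0 q.
set a := nc (bet y i.+1) in ha hb *; set b := nc (bet y (n - i.+1)) in hb0 hb *.
have h0 : b * nc q <= b by rewrite -[X in _ <= X]mulr1 ler_wpM2l.
have h0' : 0 <= b * nc q by apply: mulr_ge0.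
have h1 : (1 + r) * (b * nc q) <= 2 * b by nra.
have h2 : (1 - r) * ((1 + r) * (b * nc q)) <= (1 - r) * (2 * b) by apply: ler_wpM2l; lra.
have h3 : (1 - r) * (a + 2 * b) <= (1 - r) * (2 * K) by apply: ler_wpM2l; lra.
have h4 : 0 <= (1 - r) * K by apply: mulr_ge0; lra.
rewrite -mulrA; lra.
Qed.

End Dim.
End Basic.

From Stdlib Require Import Classical.

Theorem mainTheorem5 (R : realType) (n : nat) :
  (2 <= n)%N -> poly_convex (@Gammatilde R n).
Proof.
case: n => [|[|m']] // _.
set m := m'.+1.
move=> y ny.
have nC : ~ Cond y by move=> h; apply: ny; apply: Cond_Gam.
have [j [w [hj [hw hH]]]] : exists j w, (0 < j < m.+1)%N /\ nc w = 1 /\ ~ H (Ls y j w) (Lp y w).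
  apply: NNPP => hno; apply: nC => j hj w hw; apply: NNPP => hH.
  by apply: hno; exists j, w.
have [a [b [e [N [c [hlt hall]]]]]] := sepH hH.
pose S : {mpoly R[i][m.+1]} := ('C(m.+1, j)%:R)^-1 *:
  ('X_(inord j.-1) + w *: 'X_(inord (m.+1 - j).-1)).
pose Pp : {mpoly R[i][m.+1]} := w *: 'X_(inord m).
pose P := (a *: Pp + b *: S) * \sum_(k < N) (e *: S) ^+ k.
have hP : forall z, P.@[z] = F a b e N (Ls z j w) (Lp z w).
  move=> z; rewrite /P /F mevalM mevalD !mevalZ /Pp /S mevalXU mevalD mevalZ !mevalXU.
  rewrite raddf_sum; congr (_ * _); last first.
    by apply: eq_bigr => k _; rewrite -[LHS]/(meval z _) rmorphXn /= mevalZ mevalZ mevalD mevalZ !mevalXU /Ls /yv.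
exists P, c%:C; split.
  by rewrite hP ncE ltcR.
move=> z hz; rewrite hP ncE lecR; apply: hall.
exact: (Gam_Cond hz hj hw).
Qed.
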